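(* Let $M=M_1*_NM_2$ be an amalgamated free product of tracial von Neumann algebras $(M_1,\tau_1)$, $(M_2,\tau_2)$ over a common von Neumann subalgebra $N$ with $\tau_1|_N=\tau_2|_N$, and let $E_N:M\to N$ be the trace-preserving conditional expectation. Let $u\in M_2$ be a unitary such that $u-E_N(u)$ is invertible (e.g. if $\|E_N(u)\|<1$). Then $M_1\cap uM_1u^{-1}\subset N$.
   Context: In the amalgamated free product $M_1*_NM_2$, elements of $N$ together with reduced words $x_1\cdots x_k$, where $x_j\in M_{i_j}$, $E_N(x_j)=0$, $i_j\neq i_{j+1}$, span a WOT-dense subspace; in particular $E_{M_1}(y)=E_N(y)$ for $y\in M_2$ and vice versa, and $(M_1\ominus N)(M_2\ominus N)$ is orthogonal to $(M_2\ominus N)(M_1\ominus N)$ in $L^2(M)$. *)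

(* Defs.v *)
From HB Require Import structures.
From mathcomp Require Import all_boot all_order all_algebra.
Set Implicit Arguments. Unset Strict Implicit. Unset Printing Implicit Defensive.
Import Order.TTheory GRing.Theory Num.Theory.
Local Open Scope ring_scope.

Section Defs.
Variables (C : numClosedFieldType) (M : algType C).

Definition is_involution (star : M -> M) : Prop :=
  [/\ forall x, star (star x) = x,
      forall x y, star (x + y) = star x + star y,
      forall (a : C) x, star (a *: x) = Num.conj a *: star x
    & forall x y, star (x * y) = star y * star x].

Definition faithful_tracial_state (star : M -> M) (tau : M -> C) : Prop :=
  [/\ forall (a : C) x y, tau (a *: x + y) = a * tau x + tau y,
      tau 1 = 1,
      forall x y, tau (x * y) = tau (y * x),
      forall x, 0 <= tau (star x * x)
    & forall x, tau (star x * x) = 0 -> x = 0].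

Definition star_subalgebra (star : M -> M) (A : pred M) : Prop :=
  [/\ 1 \in A,
      forall x y, x \in A -> y \in A -> x + y \in A,
      forall x y, x \in A -> y \in A -> x * y \in A,
      forall (a : C) x, x \in A -> a *: x \in A
    & forall x, x \in A -> star x \in A].

Definition cond_expectation (star : M -> M) (tau : M -> C) (N : pred M)
  (E : M -> M) : Prop :=
  (forall (a : C) x y, E (a *: x + y) = a *: E x + E y) /\
  [/\ forall x, E x \in N,
      forall x, x \in N -> E x = x,
      forall n1 n2 x, n1 \in N -> n2 \in N -> E (n1 * x * n2) = n1 * E x * n2,
      forall x, E (star x) = star (E x)
    & forall x, tau (E x) = tau x].

(* A word of pairs (i, x), with i = false meaning x in M1, i = true meaning
   x in M2, is reduced if consecutive indices differ and each letter has
   zero conditional expectation. *)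
Definition reduced_word (M1 M2 : pred M) (E : M -> M) (w : seq (bool * M))
  : Prop :=
  [/\ (0 < size w)%N,
      sorted (fun p q : bool * M => p.1 != q.1) w
    & forall p, p \in w -> ((if p.1 then p.2 \in M2 else p.2 \in M1)
                           /\ E p.2 = 0)].

Definition word_prod (w : seq (bool * M)) : M := foldr (fun p m => p.2 * m) 1 w.

Definition free_with_amalgamation (M1 M2 : pred M) (E : M -> M) : Prop :=
  forall w, reduced_word M1 M2 E w -> E (word_prod w) = 0.

End Defs.

(* Main.v *)
Require Import Defs.
From HB Require Import structures.
From mathcomp Require Import all_boot all_order all_algebra.
Import Order.TTheory GRing.Theory Num.Theory.
Local Open Scope ring_scope.

Lemma zfour (V : zmodType) (A B C D : V) : D = A + B + C + D - A - B - C.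
Proof.
have -> : A + B + C + D - A - B - C = A + B + C + D - (A + B + C) by rewrite !opprD !addrA.
by rewrite (addrC (A + B + C)) addrK.
Qed.

Section H.
Variables (C : numClosedFieldType) (M : algType C) (M1 M2 : pred M) (E : M -> M).
Hypothesis Hfree : free_with_amalgamation M1 M2 E.

Lemma w2 b m : b \in M2 -> E b = 0 -> m \in M1 -> E m = 0 -> E (b * m) = 0.
Proof.
move=> h1 h2 h3 h4.
have := Hfree [:: (true, b); (false, m)]; rewrite /word_prod /= mulr1; apply.
split => //= p; rewrite !inE => /orP [] /eqP -> //.
Qed.

Lemma w3 b c a : b \in M2 -> E b = 0 -> c \in M1 -> E c = 0 ->
  a \in M2 -> E a = 0 -> E (b * c * a) = 0.
Proof.
move=> h1 h2 h3 h4 h5 h6.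
have := Hfree [:: (true, b); (false, c); (true, a)]; rewrite /word_prod /= mulr1 !mulrA; apply.
split => //= p; rewrite !inE => /or3P [] /eqP -> //.
Qed.

Lemma w4 b c a y : b \in M2 -> E b = 0 -> c \in M1 -> E c = 0 ->
  a \in M2 -> E a = 0 -> y \in M1 -> E y = 0 -> E (b * c * a * y) = 0.
Proof.
move=> h1 h2 h3 h4 h5 h6 h7 h8.
have := Hfree [:: (true, b); (false, c); (true, a); (false, y)].
rewrite /word_prod /= mulr1 !mulrA; apply.
split => //= p; rewrite !inE => /or4P [] /eqP -> //.
Qed.
End H.
Arguments w2 {C M M1 M2 E} Hfree {b m}.
Arguments w3 {C M M1 M2 E} Hfree {b c a}.
Arguments w4 {C M M1 M2 E} Hfree {b c a y}.

Theorem lemma2p1 (C : numClosedFieldType) (M : algType C)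
  (star : M -> M) (tau : M -> C) (M1 M2 N : pred M) (E : M -> M)
  (Hstar : is_involution star)
  (Htau : faithful_tracial_state star tau)
  (HM1 : star_subalgebra star M1) (HM2 : star_subalgebra star M2)
  (HN : star_subalgebra star N)
  (HNM1 : {subset N <= M1}) (HNM2 : {subset N <= M2})
  (HE : cond_expectation star tau N E)
  (Hfree : free_with_amalgamation M1 M2 E)
  (u : M) (Hu2 : u \in M2) (Hunit : star u * u = 1 /\ u * star u = 1)
  (Hinv : exists v : M, v * (u - E u) = 1 /\ (u - E u) * v = 1) :
  forall x : M, x \in M1 -> (exists2 y : M, y \in M1 & x = u * y * star u) ->
    x \in N.
Proof.
move=> x hx [y hy exy].
case: Hstar => sK sD sZ sM.
case: Htau => tL t1 tC tP tF.
case: HE => EL [EN Eid Emul Estar Etau].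
have sub A : star_subalgebra star A -> forall p q, p \in A -> q \in A -> p - q \in A.
  case=> _ hD _ hZ _ p q hp hq; apply: hD => //.
  by rewrite -scaleN1r; apply: hZ.
have tB p q : tau (p - q) = tau p - tau q.
  by have := tL (-1) q p; rewrite scaleN1r mulN1r addrC => ->; rewrite addrC.
have tD p q : tau (p + q) = tau p + tau q by have := tL 1 p q; rewrite scale1r mul1r.
have t0 : tau 0 = 0 by rewrite -(subrr 0) tB subrr.
have EB p q : E (p - q) = E p - E q.
  by have := EL (-1) q p; rewrite !scaleN1r addrC => ->; rewrite addrC.
have E0 : E 0 = 0 by have := EB 0 0; rewrite !subrr.
have s0 : star 0 = 0.
  have := sD 0 0; rewrite addr0 => h.
  by apply: (@addrI _ (star 0)); rewrite addr0 -h.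
have tE0 p : E p = 0 -> tau p = 0 by move=> h; rewrite -Etau h t0.
have EE p : E (E p) = E p by apply: Eid.
set u0 := E u. set a := u - u0. set x0 := E x. set x' := x - x0.
set y0 := E y. set y' := y - y0.
have hu0 : u0 \in N := EN u.
have ha : a \in M2 by apply: sub => //; apply: HNM2.
have Ea : E a = 0 by rewrite EB EE subrr.
have hx' : x' \in M1 by apply: sub => //; apply: HNM1; exact: EN.
have Ex' : E x' = 0 by rewrite EB EE subrr.
have hy' : y' \in M1 by apply: sub => //; apply: HNM1; exact: EN.
have Ey' : E y' = 0 by rewrite EB EE subrr.
have eu : u = u0 + a by rewrite /a addrC subrK.
have ex : x = x0 + x' by rewrite /x' addrC subrK.
clearbody a x'.
set b := star a. set c := star x'.
have hb : b \in M2 by case: HM2 => _ _ _ _; apply.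
have hc : c \in M1 by case: HM1 => _ _ _ _; apply.
have Eb : E b = 0 by rewrite Estar Ea s0.
have Ec : E c = 0 by rewrite Estar Ex' s0.
have M1M p q : p \in M1 -> q \in M1 -> p * q \in M1 by case: HM1 => _ _ hm _ _; apply: hm.
have M2M p q : p \in M2 -> q \in M2 -> p * q \in M2 by case: HM2 => _ _ hm _ _; apply: hm.
have M1D p q : p \in M1 -> q \in M1 -> p + q \in M1 by case: HM1 => _ hm _ _ _; apply: hm.
have E1 p n : n \in N -> E (p * n) = E p * n.
  move=> hn; have h1 : 1 \in N by case: HN.
  by have := Emul 1 n p h1 hn; rewrite !mul1r.
have E2 p n : n \in N -> E (n * p) = n * E p.
  move=> hn; have h1 : 1 \in N by case: HN.
  by have := Emul n 1 p hn h1; rewrite !mulr1.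
have LA m : m \in M1 -> tau (b * c * m) = 0.
  move=> hm; rewrite -mulrA; set m2 := c * m.
  have hm2 : m2 \in M1 by apply: M1M.
  have hm3 : m2 - E m2 \in M1 by apply: sub => //; apply: HNM1; exact: EN.
  have Em3 : E (m2 - E m2) = 0 by rewrite EB EE subrr.
  have e1 : E (b * (m2 - E m2)) = 0 by exact: (w2 Hfree hb Eb hm3 Em3).
  have e2 : E (b * E m2) = 0 by rewrite E1 // Eb mul0r.
  by rewrite -(subrK (E m2) m2) mulrDr tD (tE0 _ e1) (tE0 _ e2) addr0.
have LB : tau (b * c * a * y) = 0.
  have hy0 : y0 \in N := EN y.
  have e1 : E (b * c * a * y') = 0 by exact: (w4 Hfree hb Eb hc Ec ha Ea hy' Ey').
  have hyb : y0 * b \in M2 by apply: M2M => //; apply: HNM2.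
  have Eyb : E (y0 * b) = 0 by rewrite E2 // Eb mulr0.
  have e2 : E (y0 * b * c * a) = 0 by exact: (w3 Hfree hyb Eyb hc Ec ha Ea).
  rewrite -(subrK y0 y) -/y' mulrDr tD (tE0 _ e1) add0r tC.
  by rewrite !mulrA (tE0 _ e2).
have LC : tau (b * c * x0 * a) = 0.
  have hx0 : x0 \in N := EN x.
  have hcx : c * x0 \in M1 by apply: M1M => //; apply: HNM1.
  have Ecx : E (c * x0) = 0 by rewrite E1 // Ec mul0r.
  have e : E (b * (c * x0) * a) = 0 by exact: (w3 Hfree hb Eb hcx Ecx ha Ea).
  by rewrite -(mulrA b) (tE0 _ e).
have xuuy : x * u = u * y by rewrite exy -mulrA Hunit.1 mulr1.
have hz : x' * a = u0 * y + a * y - x0 * u0 - x0 * a - x' * u0.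
  have : x * u = x0 * u0 + x0 * a + x' * u0 + x' * a.
    by rewrite {1}ex {1}eu mulrDl !mulrDr !addrA.
  rewrite xuuy {1}eu mulrDl => H.
  have := zfour _ (x0 * u0) (x0 * a) (x' * u0) (x' * a).
  by rewrite -H.
have hu0' : u0 \in M1 by apply: HNM1.
have hx0 : x0 \in M1 by apply: HNM1; exact: EN.
have : tau (star (x' * a) * (x' * a)) = 0.
  rewrite sM -/b -/c hz !mulrDr !mulrN !tB tD.
  rewrite (LA (u0 * y)) ?M1M // (LA (x0 * u0)) ?M1M // (LA (x' * u0)) ?M1M //.
  by rewrite !mulrA LB LC !subr0 add0r.
move/tF => z0.
have ex'0 : x' = 0.
  case: Hinv => v [_ hv].
  have hav : a * v = 1 by rewrite -hv -/u0 {1}eu (addrC u0) addrK.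
  have : x' * a * v = 0 by rewrite z0 mul0r.
  by rewrite -mulrA hav mulr1.
have -> : x = x0 by rewrite ex ex'0 addr0.
exact: EN.
Qed.
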